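(* Let $\mathcal{F}$ be a $3$-uniform linear family with $S_{\mathcal{F}}=\emptyset$, let $\mathcal{M}$ be a maximum matching of $\mathcal{F}$, and let $\mathcal{M}_1=\{A_1,\ldots,A_m\}$, $\mathcal{M}_2$, $x_1,\ldots,x_m$ and $\mathcal{E}_2$ be as defined below. Then $\mathcal{E}_2=\emptyset$.
   Context: A family is a finite collection of distinct subsets of a vertex set; $3$-uniform means every member has exactly $3$ elements and linear means any two distinct members share at most one vertex. A matching is a collection of pairwise disjoint members; a maximum matching is one of largest size. $S_{\mathcal{F}}$ is the set of vertices covered by every maximum matching of $\mathcal{F}$. $\mathcal{F}_x=\{E\in\mathcal{F}:x\in E\}$; for a subfamily $\mathcal{N}$, $X_{\mathcal{N}}=\bigcup_{E\in\mathcal{N}}E$. $D_1(\mathcal{F})=\{E\in\mathcal{F}:|E\cap X_{\mathcal{M}}|=1\}$; for $A\in\mathcal{M}$, $D_1(A)=\{E\in D_1(\mathcal{F}):E\cap A\neq\emptyset\}$ and $d_1(A)=|D_1(A)|$. Let $\mathcal{M}_1=\{A\in\mathcal{M}: d_1(A)\geq 7\}=\{A_1,\ldots,A_m\}$ and $\mathcal{M}_2=\mathcal{M}\setminus\mathcal{M}_1$. For each $A_i\in\mathcal{M}_1$ all edges of $D_1(A_i)$ contain a common vertex of $A_i$ (such a vertex exists and is unique); call it $x_i$. Define $\mathcal{E}_1=\bigcup_{i=1}^m\mathcal{F}_{x_i}$ and $\mathcal{E}_2=\{E\in\mathcal{F}: E\cap B=\emptyset\text{ for all }B\in\mathcal{M}_2\}\setminus\mathcal{E}_1$.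 *)

(* Defs.v *)
From mathcomp Require Import all_boot.
Set Implicit Arguments. Unset Strict Implicit. Unset Printing Implicit Defensive.

Section Defs.
Variable T : finType.
Implicit Types (F M N : {set {set T}}) (A B E : {set T}) (x : T).

Definition uniform3 F := forall E, E \in F -> #|E| = 3.
Definition linear_family F :=
  forall E E', E \in F -> E' \in F -> E != E' -> #|E :&: E'| <= 1.

Definition matching F M :=
  M \subset F /\ (forall A B, A \in M -> B \in M -> A != B -> [disjoint A & B]).
Definition max_matching F M :=
  matching F M /\ (forall N, matching F N -> #|N| <= #|M|).

Definition XN N : {set T} := \bigcup_(E in N) E.

Definition in_S_F F (v : T) : Prop := forall M, max_matching F M -> v \in XN M.
Definition S_F_empty F : Prop := forall v, ~ in_S_F F v.

Definition F_at F x : {set {set T}} := [set E in F | x \in E].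

Definition D1 F M : {set {set T}} := [set E in F | #|E :&: XN M| == 1].
Definition D1A F M A : {set {set T}} := [set E in D1 F M | E :&: A != set0].
Definition d1 F M A := #|D1A F M A|.

Definition M1 F M : {set {set T}} := [set A in M | 7 <= d1 F M A].
Definition M2 F M : {set {set T}} := M :\: M1 F M.

(* the common vertices in A of all edges of D1(A); for A in M1 this is the
   singleton {x_A} of the paper *)
Definition common_vtx F M A : {set T} :=
  [set x in A | [forall E in D1A F M A, x \in E]].

Definition E1 F M : {set {set T}} :=
  \bigcup_(A in M1 F M) \bigcup_(x in common_vtx F M A) F_at F x.

Definition E2 F M : {set {set T}} :=
  [set E in F | [forall B in M2 F M, [disjoint E & B]]] :\: E1 F M.
End Defs.

(* Main.v *)
Require Import Defs.
From mathcomp Require Import all_boot.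
Set Implicit Arguments. Unset Strict Implicit. Unset Printing Implicit Defensive.

Section Gen.
Variable T : finType.

Lemma disjP (A B : {set T}) :
  reflect (forall v, v \in A -> v \in B -> False) [disjoint A & B].
Proof.
apply: (iffP idP).
  by move=> H v vA vB; rewrite (disjointFr H vA) in vB.
move=> H; rewrite -setI_eq0; apply/eqP/setP=> v; rewrite !inE.
by apply/negbTE/negP=> /andP[a b]; exact: H v a b.
Qed.

Lemma card_bigcup_le (I : finType) (P : {set I}) (G : I -> {set T}) :
  #|\bigcup_(i in P) G i| <= \sum_(i in P) #|G i|.
Proof.
apply: (big_ind2 (fun (U : {set T}) n => #|U| <= n)).
- by rewrite cards0.
- move=> U1 n1 U2 n2 h1 h2; rewrite cardsU.
  apply: leq_trans (leq_subr _ _) _; exact: leq_add.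
- by [].
Qed.

End Gen.
Section Gen2.
Variable T : finType.

Lemma cover_count (S : {set {set T}}) (Y : {set T}) :
  (forall D, D \in S -> exists2 y, y \in Y & y \in D) ->
  (forall y, y \in Y -> #|[set D in S | y \in D]| <= 1) ->
  #|S| <= #|Y|.
Proof.
move=> cov one.
have sub : S \subset \bigcup_(y in Y) [set D in S | y \in D].
  apply/subsetP=> D DS; have [y yY yD] := cov D DS.
  by apply/bigcupP; exists y => //; rewrite inE DS.
apply: leq_trans (subset_leq_card sub) _.
apply: leq_trans (card_bigcup_le Y (fun y => [set D in S | y \in D])) _.
rewrite -sum1_card; exact: leq_sum.
Qed.
End Gen2.

From mathcomp Require Import zify.

Lemma ar1 k : 0 < k -> 3 - k <= 2. Proof. lia. Qed.
Lemma ar2 a b n m : a <= 2 -> b <= 2 * m -> m = n -> n < 3 -> a + b <= 6.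
Proof. lia. Qed.
Lemma ar3 q q' n : q <= 3 -> q' <= q -> q' = n.+1 -> n < 3.
Proof. lia. Qed.

Section Main.
Variables (T : finType) (F M : {set {set T}}).
Hypotheses (H3 : uniform3 F) (Hlin : linear_family F) (Hmm : max_matching F M).

Lemma XNP (N : {set {set T}}) v : reflect (exists2 A, A \in N & v \in A) (v \in XN N).
Proof. exact: bigcupP. Qed.

Lemma MsubF : M \subset F. Proof. by case: Hmm => -[]. Qed.

Lemma M_disj A B : A \in M -> B \in M -> A != B -> [disjoint A & B].
Proof. by case: Hmm => -[_ h] _; exact: h. Qed.

Lemma inM_XN A v : A \in M -> v \in A -> v \in XN M.
Proof. by move=> AM vA; apply/XNP; exists A. Qed.

Lemma F_nonself D : D \in F -> ~~ [disjoint D & D].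
Proof.
move=> DF; have : 0 < #|D| by rewrite H3.
move=> /card_gt0P [v vD]; apply/negP=> /disjP h; exact: (h v).
Qed.

Lemma two_common D D' x y : D \in F -> D' \in F -> x \in D -> y \in D ->
  x \in D' -> y \in D' -> x != y -> D = D'.
Proof.
move=> DF D'F xD yD xD' yD' nxy; apply/eqP; apply: contraT => ne.
have := Hlin DF D'F ne.
have sub : [set x; y] \subset D :&: D'.
  by apply/subsetP=> v; rewrite !inE => /orP[]/eqP->; rewrite ?xD ?xD' ?yD ?yD'.
have := subset_leq_card sub; rewrite cards2 nxy; lia.
Qed.

Lemma augment (Q Dn : {set {set T}}) : Q \subset M -> Dn \subset F ->
  (forall D D', D \in Dn -> D' \in Dn -> D != D' -> [disjoint D & D']) ->
  (forall D B, D \in Dn -> B \in M -> B \notin Q -> [disjoint D & B]) ->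
  #|Dn| <= #|Q|.
Proof.
move=> QM DnF Dpw Dcross.
set N := (M :\: Q) :|: Dn.
have mN : matching F N.
  split.
    apply/subsetP=> X; rewrite !inE => /orP[/andP[_ XM]|XD].
      exact: (subsetP MsubF).
    exact: (subsetP DnF).
  move=> A B; rewrite !inE => /orP[/andP[AQ AM]|AD] /orP[/andP[BQ BM]|BD] neq.
  - exact: M_disj.
  - by rewrite disjoint_sym; apply: Dcross.
  - exact: Dcross.
  - exact: Dpw.
have := Hmm.2 N mN.
have dis : [disjoint (M :\: Q) & Dn].
  apply/disjP=> X; rewrite !inE => /andP[XQ XM] XD.
  have := F_nonself (subsetP DnF _ XD); rewrite Dcross //.
rewrite /N cardsU (disjoint_setI0 dis) cards0 subn0 cardsD.
have -> : M :&: Q = Q by apply/setIidPr.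
have := subset_leq_card QM; lia.
Qed.

Lemma D1A_props A D : D \in D1A F M A ->
  [/\ D \in F, #|D :&: XN M| = 1 & exists2 u, u \in D & u \in A].
Proof.
rewrite !inE => /andP[/andP[DF /eqP c] ne]; split=> //.
by case/set0Pn: ne => u; rewrite inE => /andP[uD uA]; exists u.
Qed.

Lemma D1A_single A D u v : D \in D1A F M A -> u \in D -> v \in D ->
  u \in XN M -> v \in XN M -> u = v.
Proof.
case/D1A_props=> _ /eqP/cards1P [w Hw] _ uD vD uX vX.
have : u \in D :&: XN M by rewrite inE uD uX.
have : v \in D :&: XN M by rewrite inE vD vX.
by rewrite Hw !inE => /eqP-> /eqP->.
Qed.

Lemma D1A_XM A D v : A \in M -> D \in D1A F M A -> v \in D -> v \in XN M -> v \in A.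
Proof.
move=> AM DA vD vX; have [_ _ [u uD uA]] := D1A_props DA.
by rewrite (D1A_single DA vD uD vX (inM_XN AM uA)).
Qed.

Lemma D1_out D : D \in D1 F M -> #|D :\: XN M| = 2.
Proof. by rewrite inE => /andP[DF /eqP c]; rewrite cardsD c H3. Qed.

Lemma D1A_disj_other A B D : A \in M -> B \in M -> A != B -> D \in D1A F M A ->
  [disjoint D & B].
Proof.
move=> AM BM nAB DA; apply/disjP=> v vD vB.
have vA := D1A_XM AM DA vD (inM_XN BM vB).
by have := M_disj AM BM nAB => /disjP; apply; [exact: vA|exact: vB].
Qed.

Lemma D1A_meet A D D' : A \in M -> D \in D1A F M A -> D' \in D1A F M A ->
  D != D' -> ~~ [disjoint D & D'].
Proof.
move=> AM DA D'A ne; apply/negP=> dis.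
suff : #|[set D; D']| <= #|[set A]| by rewrite cards2 ne cards1.
apply: augment; first by rewrite sub1set.
- apply/subsetP=> X; rewrite !inE => /orP[]/eqP->.
    by case: (D1A_props DA).
  by case: (D1A_props D'A).
- move=> X Y; rewrite !inE => /orP[]/eqP-> /orP[]/eqP->; rewrite ?eqxx //.
  by rewrite disjoint_sym.
- move=> X B; rewrite !inE => /orP[]/eqP-> BM nBA.
    by apply: (D1A_disj_other AM BM) => //; rewrite eq_sym.
  by apply: (D1A_disj_other AM BM) => //; rewrite eq_sym.
Qed.


Lemma out_killer a (S : {set {set T}}) (Y : {set T}) :
  a \in XN M -> S \subset F -> (forall D, D \in S -> a \in D) ->
  (forall y, y \in Y -> y \notin XN M) ->
  (forall D, D \in S -> exists2 y, y \in Y & y \in D) -> #|S| <= #|Y|.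
Proof.
move=> aX SF aS Yout cov; apply: cover_count => // y yY.
apply/card_le1_eqP=> D D'; rewrite !inE => /andP[DS yD] /andP[D'S yD'].
apply: (two_common (x := a) (y := y)) => //; try exact: (subsetP SF); try exact: aS.
by apply: contraNneq (Yout y yY) => <-.
Qed.

Lemma common_ex A : A \in M -> 7 <= d1 F M A -> exists x, x \in common_vtx F M A.
Proof.
move=> AM h7.
pose S a := [set D in D1A F M A | a \in D].
have [[a aA ha]|none] : (exists2 a, a \in A & 2 < #|S a|) \/
                        (forall a, a \in A -> #|S a| <= 2).
  case: (boolP [exists a in A, 2 < #|S a|]) => [/exists_inP h|/exists_inPn h].
    by left.
  by right=> a aA; rewrite leqNgt; apply: h.
- exists a; rewrite inE aA; apply/forall_inP=> D DA.
  apply: contraT => naD.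
  have DF : D \in F by case: (D1A_props DA).
  have : #|S a| <= #|D :\: XN M|.
    apply: (out_killer (a := a)).
    + exact: inM_XN AM aA.
    + by apply/subsetP=> X; rewrite inE => /andP[/D1A_props[]].
    + by move=> X; rewrite inE => /andP[].
    + by move=> y; rewrite inE => /andP[].
    + move=> X; rewrite inE => /andP[XA aX].
      have neq : X != D by apply: contraNneq naD => <-.
      have := D1A_meet AM XA DA neq; rewrite -setI_eq0 => /set0Pn [y].
      rewrite inE => /andP[yX yD]; exists y => //; rewrite inE yD andbT.
      apply/negP=> yM.
      have := D1A_single XA yX aX yM (inM_XN AM aA) => eya.
      by move: yD; rewrite eya (negbTE naD).
  rewrite D1_out; first by move=> h; have := leq_trans ha h.
  by move: DA; rewrite inE => /andP[].
- have sub : D1A F M A \subset \bigcup_(a in A) S a.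
    apply/subsetP=> D DA; have [_ _ [u uD uA]] := D1A_props DA.
    by apply/bigcupP; exists u => //; rewrite inE DA.
  have := leq_trans (subset_leq_card sub) (card_bigcup_le A S).
  have : \sum_(a in A) #|S a| <= \sum_(a in A) 2 by apply: leq_sum.
  rewrite sum_nat_const (H3 (subsetP MsubF _ AM)).
  move: h7; rewrite /d1; lia.
Qed.


Lemma E2_elem E : E \in E2 F M -> False.
Proof.
rewrite /E2 !inE => /andP[nE1 /andP[EF /forall_inP Edis]].
pose Q := [set A in M | ~~ [disjoint E & A]].
have QM : Q \subset M by apply/subsetP=> A; rewrite inE => /andP[].
have QM1 : forall A, A \in Q -> A \in M1 F M.
  move=> A; rewrite inE => /andP[AM nd]; apply: contraT => nA.
  have : A \in M2 F M by rewrite inE nA AM.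
  by move/Edis; rewrite (negbTE nd).
have Qx : forall A, A \in Q -> exists2 x, x \in common_vtx F M A & x \notin E.
  move=> A AQ; have := QM1 A AQ; rewrite inE => /andP[AM h7].
  have [x xc] := common_ex AM h7; exists x => //.
  apply: contraNN nE1 => xE; apply/bigcupP; exists A; first exact: QM1.
  by apply/bigcupP; exists x => //; rewrite inE EF.
have Q3 : #|Q| <= 3.
  rewrite -(H3 EF); apply: cover_count.
    move=> A; rewrite inE => /andP[_]; rewrite -setI_eq0 => /set0Pn [y].
    by rewrite inE => /andP[yE yA]; exists y.
  move=> y yE; apply/card_le1_eqP=> A A'; rewrite !inE.
  move=> /andP[/andP[AM _] yA] /andP[/andP[A'M _] yA'].
  apply/eqP; apply: contraT => ne.
  by have := M_disj A'M AM ne => /disjP /(_ y yA' yA).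
have XQ : forall (Q' : {set {set T}}) v, v \in XN Q' -> Q' \subset Q -> v \in XN M.
  move=> Q' v /XNP [A AQ vA] sQ; apply/XNP; exists A => //.
  exact: (subsetP QM _ (subsetP sQ _ AQ)).
have main : forall n (Q' : {set {set T}}), #|Q'| = n -> Q' \subset Q ->
  exists Ds : {set {set T}}, [/\ Ds \subset D1 F M, #|Ds| = #|Q'|,
    (forall D D', D \in Ds -> D' \in Ds -> D != D' -> [disjoint D & D']),
    (forall D, D \in Ds -> [disjoint D & E]) &
    (forall D v, D \in Ds -> v \in D -> v \in XN M -> v \in XN Q')].
  elim=> [|n IH] Q' cQ sQ.
    exists set0; rewrite cards0 cQ; split=> //.
    - by apply/subsetP=> ?; rewrite inE.
    - by move=> ?; rewrite inE.
    - by move=> ?; rewrite inE.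
    - by move=> ?; rewrite inE.
  have : 0 < #|Q'| by rewrite cQ.
  case/card_gt0P=> A AQ'.
  have AQ : A \in Q := subsetP sQ _ AQ'.
  have AM : A \in M := subsetP QM _ AQ.
  have cQ'' : #|Q' :\ A| = n by move: cQ; rewrite (cardsD1 A) AQ'; case.
  have sQ'' : Q' :\ A \subset Q by apply: subset_trans sQ; apply: subsetDl.
  have [Ds [DsD1 cDs Dspw DsE DsX]] := IH _ cQ'' sQ''.
  have [x xc xE] := Qx A AQ.
  move: (xc); rewrite inE => /andP[xA /forall_inP xall].
  have xX : x \in XN M := inM_XN AM xA.
  have h7 : 7 <= #|D1A F M A| by have := QM1 A AQ; rewrite inE => /andP[].
  pose bad := (E :|: XN Ds) :\: XN M.
  have cbad : #|bad| <= 6.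
    have sub : bad \subset (E :\: XN M) :|: \bigcup_(D in Ds) (D :\: XN M).
      apply/subsetP=> v; rewrite !inE => /andP[vX /orP[vE|/XNP [D DDs vD]]].
        by rewrite vE vX.
      by apply/orP; right; apply/bigcupP; exists D => //; rewrite inE vX.
    apply: leq_trans (subset_leq_card sub) _.
    apply: leq_trans (leq_card_setU _ _) _.
    have h1 : #|E :\: XN M| <= 2.
      rewrite cardsD (H3 EF).
      apply: ar1.
      move: AQ; rewrite inE => /andP[_]; rewrite -setI_eq0 => /set0Pn [v].
      rewrite inE => /andP[vE vA]; apply/card_gt0P; exists v.
      by rewrite inE vE (inM_XN AM vA).
    have h2 : #|\bigcup_(D in Ds) (D :\: XN M)| <= 2 * #|Ds|.
      apply: leq_trans (card_bigcup_le Ds (fun D => D :\: XN M)) _.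
      rewrite mulnC -sum_nat_const; apply: leq_sum => D DDs.
      by rewrite D1_out // (subsetP DsD1).
    apply: (ar2 h1 h2); first by rewrite cDs cQ''.
    exact: (ar3 Q3 (subset_leq_card sQ) cQ).
  pose killed := [set D in D1A F M A | ~~ [disjoint D & bad]].
  have ck : #|killed| <= #|bad|.
    apply: (out_killer (a := x)) => //.
    + apply/subsetP=> X; rewrite inE => /andP[/D1A_props[]] //.
    + by move=> X; rewrite inE => /andP[/xall].
    + by move=> y; rewrite inE => /andP[].
    + move=> X; rewrite inE => /andP[_]; rewrite -setI_eq0 => /set0Pn [y].
      by rewrite inE => /andP[yX ybad]; exists y.
  have : ~~ (D1A F M A \subset killed).
    apply/negP=> sk.
    by have := leq_trans h7 (leq_trans (subset_leq_card sk) (leq_trans ck cbad)).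
  case/subsetPn=> D DA; rewrite inE DA /= negbK => Dbad.
  have xD : x \in D := xall D DA.
  have Dout : forall v, v \in D -> v != x -> v \notin XN M.
    move=> v vD nvx; apply/negP=> vX.
    by have := D1A_single DA vD xD vX xX; apply/eqP.
  have DE : [disjoint D & E].
    apply/disjP=> v vD vE; case: (eqVneq v x) => [vx|nvx].
      by rewrite -vx vE in xE.
    have := Dout v vD nvx => vX.
    by have := Dbad => /disjP /(_ v vD); apply; rewrite !inE vE vX.
  have DDs : forall D', D' \in Ds -> [disjoint D & D'].
    move=> D' D'Ds; apply/disjP=> v vD vD'; case: (eqVneq v x) => [vx|nvx].
      rewrite vx in vD'.
      have := DsX D' x D'Ds vD' xX => /XNP [A' A'Q xA'].
      move: A'Q; rewrite !inE => /andP[nA' A'Q']; rewrite eq_sym in nA'.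
      have A'M : A' \in M := subsetP QM _ (subsetP sQ _ A'Q').
      by have := M_disj AM A'M (nA' : A != A') => /disjP /(_ x xA xA').
    have := Dout v vD nvx => vX.
    by have := Dbad => /disjP /(_ v vD); apply; rewrite !inE vX; apply/orP; right; apply/XNP; exists D'.
  have DnDs : D \notin Ds.
    apply/negP=> DDs'; have := DDs D DDs'; apply/negP; apply: F_nonself.
    by case: (D1A_props DA).
  exists (D |: Ds); split.
  - apply/subsetP=> X; rewrite !inE => /orP[/eqP->|XDs].
      by move: DA; rewrite !inE => /andP[].
    by move: (subsetP DsD1 _ XDs); rewrite inE.
  - by rewrite cardsU1 DnDs cDs cQ'' cQ.
  - move=> X Y; rewrite !inE => /orP[/eqP->|XDs] /orP[/eqP->|YDs] ne.
    + by rewrite eqxx in ne.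
    + exact: DDs.
    + by rewrite disjoint_sym; apply: DDs.
    + exact: Dspw.
  - move=> X; rewrite !inE => /orP[/eqP->|XDs]; first exact: DE.
    exact: DsE.
  - move=> X v; rewrite !inE => /orP[/eqP->|XDs] vX vM.
      by apply/XNP; exists A => //; apply: (D1A_XM AM DA).
    have /XNP [A' A'Q vA'] := DsX X v XDs vX vM.
    by apply/XNP; exists A' => //; move: A'Q; rewrite !inE => /andP[].
have [Ds [DsD1 cDs Dspw DsE DsX]] := main _ Q erefl (subxx Q).
have EnDs : E \notin Ds.
  apply/negP=> EDs; have := DsE E EDs; apply/negP; exact: F_nonself.
have : #|E |: Ds| <= #|Q|.
  apply: augment => //.
  - apply/subsetP=> X; rewrite !inE => /orP[/eqP->//|XDs].
    by have := subsetP DsD1 _ XDs; rewrite inE => /andP[].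
  - move=> X Y; rewrite !inE => /orP[/eqP->|XDs] /orP[/eqP->|YDs] ne.
    + by rewrite eqxx in ne.
    + by rewrite disjoint_sym; apply: DsE.
    + exact: DsE.
    + exact: Dspw.
  - move=> X B; rewrite !inE => /orP[/eqP->|XDs] BM.
      by rewrite BM /= negbK.
    rewrite BM /= => BQ; apply/disjP=> v vX vB.
    have /XNP [A' A'Q vA'] := DsX X v XDs vX (inM_XN BM vB).
    have A'M : A' \in M := subsetP QM _ A'Q.
    have ne : A' != B by apply: contraNneq BQ => <-; move: A'Q; rewrite inE => /andP[].
    by have := M_disj A'M BM ne => /disjP /(_ v vA' vB).
by rewrite cardsU1 EnDs cDs ltnn.
Qed.

End Main.

Theorem proposition7 (T : finType) (F M : {set {set T}}) :
  uniform3 F -> linear_family F -> S_F_empty F -> max_matching F M ->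
  E2 F M = set0.
Proof.
move=> H3 Hlin _ Hmm; apply/setP=> E; rewrite in_set0.
by apply/negbTE/negP=> /(E2_elem H3 Hlin Hmm).
Qed.
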